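(* Let $\mathfrak{R}$ be either the finite field $\mathbb{F}_q$ ($q$ a prime power) or the ring $\mathbb{Z}_k$ ($k\ge 2$), and let $\chi$ be the character of $\mathfrak{R}$ described in the context. Let $C$ and $D$ be two $\mathfrak{R}$-linear codes of length $n$ and let $\bm{w}\in\mathfrak{R}^n$. Then \[ \mathfrak{Jac}(C,D^{\perp},\bm{w}; x_{a} : a \in \mathfrak{R}^{3}) =\frac{1}{|D|}\,\mathfrak{Jac}\Big(C,D,\bm{w};\ \sum_{b\in\mathfrak{R}}\chi(a_2 b)\,x_{(a_1,b,a_3)} : a=(a_1,a_2,a_3)\in\mathfrak{R}^{3}\Big), \] where the right-hand side means the polynomial $\mathfrak{Jac}(C,D,\bm{w};x_a : a\in\mathfrak{R}^3)$ with each variable $x_{(a_1,a_2,a_3)}$ replaced by $\sum_{b\in\mathfrak{R}}\chi(a_2 b)\,x_{(a_1,b,a_3)}$.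
   Context: An $\mathbb{F}_q$-linear code of length $n$ is a subspace of $\mathbb{F}_q^n$; a $\mathbb{Z}_k$-linear code of length $n$ is an additive subgroup of $\mathbb{Z}_k^n$. For $\bm{u},\bm{v}\in\mathfrak{R}^n$, $\bm{u}\cdot\bm{v}=\sum_i u_iv_i$, and the dual code is $C^\perp=\{\bm{v}\in\mathfrak{R}^n : \bm{u}\cdot\bm{v}=0 \text{ for all }\bm{u}\in C\}$. The character $\chi:\mathfrak{R}\to\mathbb{C}^\times$ is defined as follows. If $\mathfrak{R}=\mathbb{F}_q$ with $q=p^f$, $p$ prime, fix a root $\lambda$ of a primitive irreducible polynomial of degree $f$ over $\mathbb{F}_p$, write each $\alpha\in\mathbb{F}_q$ uniquely as $\alpha=\alpha_0+\alpha_1\lambda+\cdots+\alpha_{f-1}\lambda^{f-1}$ with $\alpha_i\in\mathbb{F}_p$, and set $\chi(\alpha)=\zeta_p^{\alpha_0}$ where $\zeta_p$ is a primitive $p$-th root of unity. If $\mathfrak{R}=\mathbb{Z}_k$, set $\chi(\alpha)=\zeta_k^{\alpha}$ with $\zeta_k$ a primitive $k$-th root of unity. For $\bm{u},\bm{v},\bm{w}\in\mathfrak{R}^n$ and $a\in\mathfrak{R}^3$, let $h_a(\bm{u},\bm{v};\bm{w})=\#\{i : (u_i,v_i,w_i)=a\}$. The complete joint Jacobi polynomial of $\mathfrak{R}$-linear codes $C,D$ of length $n$ with respect to $\bm{w}$ is the polynomial in the $|\mathfrak{R}|^3$ variables $x_a$ ($a\in\mathfrak{R}^3$) \[\mathfrak{Jac}(C,D,\bm{w};x_a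 : a\in\mathfrak{R}^3)=\sum_{\bm{u}\in C,\ \bm{v}\in D}\ \prod_{a\in\mathfrak{R}^3}x_a^{h_a(\bm{u},\bm{v};\bm{w})}.\] *)

(* Defs.v *)
From HB Require Import structures.
From mathcomp Require Import all_boot all_order all_algebra all_field.
From mathcomp Require Import mpoly.
Set Implicit Arguments. Unset Strict Implicit. Unset Printing Implicit Defensive.
Import GRing.Theory Num.Theory.
Local Open Scope ring_scope.

Section Jacobi.
Variables (R : finComNzRingType) (n : nat).

Definition dotv (u v : 'rV[R]_n) : R := \sum_(i < n) u 0 i * v 0 i.

Definition dual_code (C : {set 'rV[R]_n}) : {set 'rV[R]_n} :=
  [set v | [forall u in C, dotv u v == 0]].

Definition hcount (a : R * R * R) (u v w : 'rV[R]_n) : nat :=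
  #|[set i : 'I_n | (u 0 i, v 0 i, w 0 i) == a]|.

Definition nvar := #|{: R * R * R}|.

Definition xvar (a : R * R * R) : {mpoly algC[nvar]} := 'X_(enum_rank a).

Definition Jac (C D : {set 'rV[R]_n}) (w : 'rV[R]_n) : {mpoly algC[nvar]} :=
  \sum_(u in C) \sum_(v in D) \prod_(a : R * R * R) xvar a ^+ hcount a u v w.

Definition subst_vars (s : R * R * R -> {mpoly algC[nvar]})
    (p : {mpoly algC[nvar]}) : {mpoly algC[nvar]} :=
  comp_mpoly [tuple s (enum_val i) | i < nvar] p.

Definition chi_subst (chi : R -> algC) (a : R * R * R) : {mpoly algC[nvar]} :=
  \sum_(b : R) (chi (a.1.2 * b))%:MP * xvar (a.1.1, b, a.2).

End Jacobi.

Definition Flinear_code (F : finFieldType) n (C : {set 'rV[F]_n}) : Prop :=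
  0 \in C /\ (forall u v, u \in C -> v \in C -> u + v \in C)
  /\ (forall (c : F) u, u \in C -> c *: u \in C).

Definition Zlinear_code (R : finComNzRingType) n (C : {set 'rV[R]_n}) : Prop :=
  0 \in C /\ (forall u v, u \in C -> v \in C -> u - v \in C).

Definition chiZ (k : nat) (zeta : algC) (alpha : 'Z_k) : algC := zeta ^+ (alpha : nat).

(* the character of F_q described in the context: if
   alpha = alpha_0 + alpha_1 lambda + ... + alpha_(f-1) lambda^(f-1), alpha_i in F_p,
   then chi(alpha) = zeta_p ^ alpha_0.  (Elements of F_p are represented by
   naturals < p, embedded in F via %:R.) *)
Definition is_field_char (F : finFieldType) (p f : nat) (lambda : F) (zeta : algC)
    (chi : F -> algC) : Prop :=
  forall (alpha : F) (c : 'I_f -> 'I_p) (f_gt0 : (0 < f)%N),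
    alpha = \sum_(i < f) ((c i : nat)%:R * lambda ^+ i) ->
    chi alpha = zeta ^+ (c (Ordinal f_gt0) : nat).

(* Main.v *)
Require Import Defs.
From HB Require Import structures.
From mathcomp Require Import all_boot all_order all_algebra all_field.
From mathcomp Require Import mpoly.

Import GRing.Theory Num.Theory.
Local Open Scope ring_scope.
Set Implicit Arguments. Unset Strict Implicit. Unset Printing Implicit Defensive.
Lemma powers_all (F : finFieldType) (lambda : F) :
  (#|F|.-1).-primitive_root lambda -> forall y : F, y != 0 -> exists k : nat, y = lambda ^+ k.
Proof.
move=> prim y y0.
have q1 : (0 < #|F|.-1)%N by rewrite -ltnS prednK ?finNzRing_gt1 // (ltn_trans _ (finNzRing_gt1 F)).
pose S := [set lambda ^+ (i : 'I_(#|F|.-1)) | i : 'I_(#|F|.-1)].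
have cS : #|S| = #|F|.-1.
  rewrite card_imset ?card_ord // => i j /eqP.
  rewrite (eq_prim_root_expr prim) !modn_small // => /eqP; exact: val_inj.
have sS : S \subset [set~ 0].
  apply/subsetP => _ /imsetP[i _ ->]; rewrite !inE expf_eq0.
  apply/nandP; right; apply/eqP => l0; have := prim_expr_order prim.
  by rewrite l0 expr0n eqn0Ngt q1 /= => /eqP; rewrite eq_sym oner_eq0.
have : S == [set~ 0] by rewrite -(subset_leqif_cards sS) cS cardsC1.
move/eqP => eS; have : y \in S by rewrite eS !inE.
by case/imsetP => i _ ->; exists i.
Qed.

Lemma repr_exists (F : finFieldType) (p f : nat) (lambda : F) (pF : p \in [pchar F]) :
  prime p -> #|F| = (p ^ f)%N -> (#|F|.-1).-primitive_root lambda ->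
  forall alpha : F, exists c : 'I_f -> 'I_p,
    alpha = \sum_(i < f) ((c i : nat)%:R * lambda ^+ i).
Proof.
move=> pp cF prim alpha.
pose L := pPrimeCharType pF.
pose x : L := lambda.
pose E := <<1%AS; x>>%AS.
have Eall : forall y : L, y \in E.
  move=> y; have [->|y0] := eqVneq y 0; first exact: mem0v.
  have [k ->] := powers_all prim y0.
  elim: k => [|k IH]; first by rewrite expr0 mem1v.
  by rewrite exprS memvM // memv_adjoin.
have dimE : (adjoin_degree 1%AS x <= f)%N.
  have := dim_Fadjoin 1%AS x; rewrite dimv1 muln1 => <-.
  have := dimvS (subvf (E : {vspace L})).
  by rewrite pprimeChar_dimf /= cF pfactorK.
pose P := Fadjoin_poly 1%AS x alpha.
have Pe : P.[x] = alpha by apply: Fadjoin_poly_eq.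
have Pc : forall i, exists k : 'I_p, P`_i = (k : nat)%:R.
  move=> i; have := polyOverP (Fadjoin_polyOver 1%AS x alpha) i.
  case/vlineP => a ->.
  have ap : (a < p)%N := leq_trans (ltn_ord a) (eq_leq (Fp_cast pp)).
  by exists (Ordinal ap); exact: mulr1.
have [c Hc] := fin_all_exists (fun i : 'I_f => Pc i).
exists c; rewrite -[LHS]Pe (horner_coef_wide _ (leq_trans (size_Fadjoin_poly _ _ _) dimE)).
by apply: eq_bigr => i _; rewrite Hc.
Qed.

Section Core.
Variables (R : finComNzRingType) (n : nat) (chi : R -> algC).
Hypothesis chiD : forall x y, chi (x + y) = chi x * chi y.
Hypothesis chi0 : chi 0 = 1.

Lemma monoE (u v w : 'rV[R]_n) :
  \prod_(a : R * R * R) xvar a ^+ hcount a u v w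
  = \prod_(i < n) xvar (u 0 i, v 0 i, w 0 i).
Proof.
rewrite (partition_big (fun i : 'I_n => (u 0 i, v 0 i, w 0 i)) xpredT) //=.
apply: eq_bigr => a _.
rewrite /hcount -prodr_const; symmetry; apply: eq_big => [i|i]; rewrite ?inE //.
by move/eqP->.
Qed.

Lemma subst_prod (s : R * R * R -> {mpoly algC[nvar R]}) (g : 'I_n -> R * R * R) :
  subst_vars s (\prod_(i < n) xvar (g i)) = \prod_(i < n) s (g i).
Proof.
rewrite /subst_vars rmorph_prod; apply: eq_bigr => i _.
rewrite /xvar /=. rewrite (@comp_mpolyXU (nvar R)). by rewrite -tnth_nth tnth_mktuple enum_rankK.
Qed.

Lemma subst_mono (s : R * R * R -> {mpoly algC[nvar R]}) (u v w : 'rV[R]_n) :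
  subst_vars s (\prod_(i < n) xvar (u 0 i, v 0 i, w 0 i)) = \prod_(i < n) s (u 0 i, v 0 i, w 0 i).
Proof. exact: (subst_prod s (fun i => (u 0 i, v 0 i, w 0 i))). Qed.

Lemma chi_dot (d v : 'rV[R]_n) : chi (dotv d v) = \prod_(i < n) chi (d 0 i * v 0 i).
Proof. by rewrite /dotv (big_morph chi chiD chi0). Qed.

Lemma expand (u d w : 'rV[R]_n) :
  \prod_(i < n) chi_subst chi (u 0 i, d 0 i, w 0 i)
  = \sum_(v : 'rV[R]_n) (chi (dotv d v))%:MP * \prod_(i < n) xvar (u 0 i, v 0 i, w 0 i).
Proof.
rewrite /chi_subst /= bigA_distr_bigA /=.
rewrite (reindex (fun v : 'rV[R]_n => [ffun i => v 0 i])); last first.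
  exists (fun f : {ffun 'I_n -> R} => \row_i f i) => [v _|f _].
    by apply/rowP => i; rewrite mxE ffunE.
  by apply/ffunP => i; rewrite ffunE mxE.
apply: eq_bigr => v _; rewrite chi_dot.
rewrite (big_morph (fun c : algC => c%:MP) (@mpolyCM _ _) (mpolyC1 _ _)) -big_split /=.
by apply: eq_bigr => i _; rewrite ffunE.
Qed.

Lemma subst_sum (s : R * R * R -> {mpoly algC[nvar R]}) (I : finType) (P : pred I) F :
  subst_vars s (\sum_(i | P i) F i) = \sum_(i | P i) subst_vars s (F i).
Proof. by rewrite /subst_vars raddf_sum. Qed.

Lemma subst_scale (s : R * R * R -> {mpoly algC[nvar R]}) c p :
  subst_vars s (c *: p) = c *: subst_vars s p.
Proof. by rewrite /subst_vars comp_mpolyZ. Qed.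

Lemma core (C D : {set 'rV[R]_n}) (w : 'rV[R]_n) : 0 \in D ->
  (forall v, \sum_(d in D) chi (dotv d v) = if v \in dual_code D then #|D|%:R else 0) ->
  Jac C (dual_code D) w = (#|D|%:R)^-1 *: subst_vars (chi_subst chi) (Jac C D w).
Proof.
move=> D0 orth.
have Dn0 : (#|D|%:R : algC) != 0 by rewrite pnatr_eq0 -lt0n; apply/card_gt0P; exists 0.
rewrite /Jac subst_sum scaler_sumr; apply: eq_bigr => u _.
rewrite subst_sum.
under [X in _ *: X]eq_bigr => d _ do rewrite monoE subst_mono expand.
rewrite exchange_big /= scaler_sumr.
under [RHS]eq_bigr => v _ do rewrite -mulr_suml -raddf_sum /= orth.
rewrite [RHS](bigID (fun v => v \in dual_code D)) /= [X in _ + X]big1 ?addr0; last first.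
  by move=> v /negbTE ->; rewrite mul0r scaler0.
under eq_bigr => v _ do rewrite monoE.
apply: eq_bigr => v ->; rewrite mul_mpolyC scalerA mulVf // scale1r.
done.
Qed.
End Core.

Section Orth.
Variables (R : finComNzRingType) (n : nat) (chi : R -> algC).
Hypothesis chiD : forall x y, chi (x + y) = chi x * chi y.
Hypothesis chi0 : chi 0 = 1.

Lemma dotvDl (a b v : 'rV[R]_n) : dotv (a + b) v = dotv a v + dotv b v.
Proof. by rewrite /dotv -big_split; apply: eq_bigr => i _; rewrite mxE mulrDl. Qed.

Lemma dotvZl c (a v : 'rV[R]_n) : dotv (c *: a) v = c * dotv a v.
Proof. by rewrite /dotv mulr_sumr; apply: eq_bigr => i _; rewrite mxE mulrA. Qed.

Lemma notdual (D : {set 'rV[R]_n}) v : v \notin dual_code D ->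
  exists2 u, u \in D & dotv u v != 0.
Proof.
rewrite inE => /forallPn[u]; rewrite negb_imply => /andP[uD nz].
by exists u.
Qed.

Lemma orth_gen (D : {set 'rV[R]_n}) : 0 \in D ->
  (forall a b, a \in D -> b \in D -> a - b \in D) ->
  (forall v, v \notin dual_code D -> exists2 d, d \in D & chi (dotv d v) != 1) ->
  forall v, \sum_(d in D) chi (dotv d v) = if v \in dual_code D then #|D|%:R else 0.
Proof.
move=> D0 Dsub nt v; case: ifPn => vD.
  rewrite -sumr_const; apply: eq_bigr => d dD.
  move: vD; rewrite inE => /forallP/(_ d); rewrite dD /= => /eqP ->.
  exact: chi0.
have [d0 d0D nt0] := nt v vD.
set S := \sum_(d in D) _.
have eS : S = chi (dotv d0 v) * S.
  rewrite {1}/S (reindex_inj (addIr d0)) /= mulr_sumr.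
  rewrite (eq_bigl (fun d => d \in D)); last first.
    move=> d; apply/idP/idP => H.
      by have := Dsub _ _ H d0D; rewrite addrK.
    by have := Dsub _ _ H (Dsub _ _ D0 d0D); rewrite sub0r opprK.
  by apply: eq_bigr => d _; rewrite dotvDl chiD mulrC.
have : S * (1 - chi (dotv d0 v)) = 0 by rewrite mulrBr mulr1 mulrC -eS subrr.
move/eqP; rewrite mulf_eq0 subr_eq0 [1 == _]eq_sym (negbTE nt0) orbF.
by move/eqP.
Qed.
End Orth.

Lemma Fcase (F : finFieldType) (p f : nat) (lambda : F) (zeta : algC) (chi : F -> algC)
          (n : nat) (C D : {set 'rV[F]_n}) (w : 'rV[F]_n) :
      prime p -> (0 < f)%N -> p \in [pchar F] -> #|F| = (p ^ f)%N ->
      (#|F|.-1).-primitive_root lambda ->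
      p.-primitive_root zeta ->
      is_field_char p f lambda zeta chi ->
      Flinear_code C -> Flinear_code D ->
      Jac C (dual_code D) w =
      (#|D|%:R)^-1 *: subst_vars (chi_subst chi) (Jac C D w).
Proof.
move=> pp f0 pF cF prim zprim fc _ [D0 [Dadd Dscale]].
have rep := repr_exists pF pp cF prim.
have p0 : (0 < p)%N by apply: prime_gt0.
have chiD : forall x y, chi (x + y) = chi x * chi y.
  move=> x y; have [c1 e1] := rep x; have [c2 e2] := rep y.
  pose c3 i := Ordinal (ltn_pmod (c1 i + c2 i) p0).
  have e3 : x + y = \sum_(i < f) ((c3 i : nat)%:R * lambda ^+ i).
    rewrite e1 e2 -big_split; apply: eq_bigr => i _.
    by rewrite /= (GRing.natr_mod_pchar pF) natrD mulrDl.
  by rewrite (fc _ _ f0 e1) (fc _ _ f0 e2) (fc _ _ f0 e3) /= (prim_expr_mod zprim) exprD.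
have chi0 : chi 0 = 1.
  have e0 : (0 : F) = \sum_(i < f) (((Ordinal p0 : 'I_p) : nat)%:R * lambda ^+ i).
    by rewrite big1 // => i _; rewrite mul0r.
  by rewrite (fc _ (fun _ => Ordinal p0) f0 e0) expr0.
have chi1 : chi 1 != 1.
  have lt : forall i : 'I_f, (((i : nat) == 0%N) < p)%N.
    by move=> i; apply: leq_ltn_trans (leq_b1 _) (prime_gt1 pp).
  have e1 : (1 : F) = \sum_(i < f) (((Ordinal (lt i) : 'I_p) : nat)%:R * lambda ^+ i).
    rewrite (bigD1 (Ordinal f0)) //= big1 ?addr0 ?mul1r ?expr0 //.
    move=> i /eqP ne; case: eqP => [h|]; last by rewrite mul0r.
    by case: ne; apply: val_inj.
  rewrite (fc _ _ f0 e1) /= expr1.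
  apply/negP => /eqP z1; have := prim_order_dvd zprim 1.
  by rewrite expr1 z1 eqxx dvdn1 => /eqP p1; move: (prime_gt1 pp); rewrite p1.
apply: core => //.
apply: orth_gen => //.
  by move=> a b aD bD; rewrite -scaleN1r; apply: Dadd => //; apply: Dscale.
move=> v /notdual[u uD nz].
exists ((dotv u v)^-1 *: u); first exact: Dscale.
by rewrite dotvZl mulVf.
Qed.

Lemma Zcase (k : nat) (zeta : algC) (n : nat) (C D : {set 'rV['Z_k]_n}) (w : 'rV['Z_k]_n) :
      (1 < k)%N ->
      k.-primitive_root zeta ->
      Zlinear_code C -> Zlinear_code D ->
      Jac C (dual_code D) w =
      (#|D|%:R)^-1 *: subst_vars (chi_subst (chiZ zeta)) (Jac C D w).
Proof.
move=> k1 zprim _ [D0 Dsub].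
have chiD : forall x y : 'Z_k, chiZ zeta (x + y) = chiZ zeta x * chiZ zeta y.
  have kT : (k %| (Zp_trunc k).+2)%N by rewrite Zp_cast.
  move=> x y; rewrite /chiZ -exprD -(prim_expr_mod zprim) /=.
  by rewrite modn_dvdm // (prim_expr_mod zprim).
have chi0 : chiZ zeta (0 : 'Z_k) = 1 by exact: expr0.
apply: core => //.
apply: orth_gen => //.
move=> v /notdual[u uD nz]; exists u => //.
rewrite /chiZ -(prim_order_dvd zprim).
set a := dotv u v in nz *.
have a0 : (0 < (a : nat))%N by rewrite lt0n; apply: contra nz => /eqP h; apply/eqP/val_inj.
have ak : ((a : nat) < k)%N := leq_trans (ltn_ord a) (eq_leq (Zp_cast k1)).
by rewrite gtnNdvd.
Qed.

Theorem theorem3p3 :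
  (* Case R = F_q, q = p^f *)
  (forall (F : finFieldType) (p f : nat) (lambda : F) (zeta : algC) (chi : F -> algC)
          (n : nat) (C D : {set 'rV[F]_n}) (w : 'rV[F]_n),
      prime p -> (0 < f)%N -> p \in [pchar F] -> #|F| = (p ^ f)%N ->
      (* lambda is a root of a primitive irreducible polynomial of degree f over F_p,
         i.e. lambda generates the multiplicative group F_q^* *)
      (#|F|.-1).-primitive_root lambda ->
      p.-primitive_root zeta ->
      is_field_char p f lambda zeta chi ->
      Flinear_code C -> Flinear_code D ->
      Jac C (dual_code D) w =
      (#|D|%:R)^-1 *: subst_vars (chi_subst chi) (Jac C D w))
  /\
  (* Case R = Z_k, k >= 2 *)
  (forall (k : nat) (zeta : algC) (n : nat) (C D : {set 'rV['Z_k]_n}) (w : 'rV['Z_k]_n),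
      (1 < k)%N ->
      k.-primitive_root zeta ->
      Zlinear_code C -> Zlinear_code D ->
      Jac C (dual_code D) w =
      (#|D|%:R)^-1 *: subst_vars (chi_subst (chiZ zeta)) (Jac C D w)).
Proof.
split; [exact: Fcase | exact: Zcase].
Qed.
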